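(* Let $m\ge7$ with $m\equiv3\pmod4$, let $N=3^m-1$ and $v=\frac{3^m-1}{2}+3^{(m-1)/2}-1$. Then $\gcd(v,N)=1$, and for every integer $i$ with $0\le i\le\frac{3^{(m-1)/2}+1}{4}$, the $3$-weight of $v(1+2i)\bmod N$ is congruent to $3$ modulo $4$ (i.e. the $3$-adic digit vector of $v(1+2i)\bmod N$ lies in $S_3(m)$).
   Context: For an integer $i$, $i\bmod N$ is the unique $s\in\{0,\dots,N-1\}$ with $N\mid i-s$. For $0\le s\le 3^m-1$ with $3$-adic expansion $s=\sum_{j=0}^{m-1}s_j3^j$, $s_j\in\{0,1,2\}$, the $3$-weight is $\mathrm{wt}_3(s)=\sum_j s_j$. $S_j(m)=\{(i_0,\dots,i_{m-1})\in\{0,1,2\}^m:\sum i_k\equiv j\pmod 4\}$. *)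

(* Defs.v *)
From mathcomp Require Import all_boot.
Set Implicit Arguments. Unset Strict Implicit. Unset Printing Implicit Defensive.

Definition digit3 (s j : nat) : nat := (s %/ 3 ^ j) %% 3.

Definition wt3 (m s : nat) : nat := \sum_(j < m) digit3 s j.

(* Main.v *)
Require Import Defs.
From mathcomp Require Import all_boot zify.

Lemma wt3_split a b x y : x < 3 ^ a -> wt3 (a + b) (x + 3 ^ a * y) = wt3 a x + wt3 b y.
Proof.
move=> hx; rewrite /wt3 big_split_ord /=; congr (_ + _); apply: eq_bigr => j _; rewrite /digit3 /=.
- have ja : j < a := ltn_ord j.
  have -> : 3 ^ a = 3 ^ (a - j).-1 * 3 * 3 ^ j.
    by rewrite -expnSr prednK ?subn_gt0 // -expnD subnK // ltnW.
  rewrite addnC -mulnA mulnC -mulnA.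
  rewrite (mulnC (3 ^ j)) divnMDl ?expn_gt0 //.
  by rewrite mulnA modnMDl.
- by rewrite expnD divnMA (mulnC (3 ^ a) y) (addnC x) divnMDl ?expn_gt0 // (divn_small hx) addn0.
Qed.

Lemma wt3_0 n : wt3 n 0 = 0.
Proof. by rewrite /wt3 big1 // => j _; rewrite /digit3 div0n. Qed.

Lemma wt3_small d : d < 3 -> wt3 1 d = d.
Proof. by move=> hd; rewrite /wt3 big_ord1 /digit3 expn0 divn1 modn_small. Qed.

Lemma wt3_compl n A B : A + B = 3 ^ n - 1 -> wt3 n A + wt3 n B = 2 * n.
Proof.
elim: n A B => [|n IH] A B hAB.
  by rewrite /wt3 !big_ord0.
have hA := divn_eq A 3; have hB := divn_eq B 3.
have hA3 : A %% 3 < 3 by rewrite ltn_mod.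
have hB3 : B %% 3 < 3 by rewrite ltn_mod.
have h3n : 0 < 3 ^ n by rewrite expn_gt0.
have hpow : 3 ^ n.+1 = 3 * 3 ^ n by rewrite expnS.
have e : A %% 3 + B %% 3 = 2 /\ A %/ 3 + B %/ 3 = 3 ^ n - 1 by lia.
case: e => e1 e2.
have eA : A = A %% 3 + 3 ^ 1 * (A %/ 3) by lia.
have eB : B = B %% 3 + 3 ^ 1 * (B %/ 3) by lia.
rewrite -add1n {1}eA {1}eB !wt3_split ?expn1 ?ltn_mod // !wt3_small ?ltn_mod //.
have := IH _ _ e2. lia.
Qed.

From mathcomp Require Import ring.

Lemma e1 o c K : K = 2 * o + 1 -> c <= o ->
  o + K * (K + o) + (K - 1) * c = (o - c) + K * ((o + c) + K * 1).
Proof.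
move=> -> hc; have [d ->] : exists d, o = d + c by exists (o - c); rewrite subnK.
rewrite !addnK; ring.
Qed.

Lemma e2 o K : K = 2 * o + 1 -> 0 < o ->
  o + K * (K + o) + (K - 1) * (o + 2) = (K - 2) + K * (0 + K * 2).
Proof.
move=> -> ho; have [p ->] : exists p, o = p + 1 by exists (o - 1); rewrite subnK.
rewrite !addnK.
have -> : 2 * (p + 1) + 1 - 2 = 2 * p + 1 by lia.
ring.
Qed.

Lemma e3 o c i K : K = 2 * o + 1 -> c = 1 + 2 * i ->
  (o + K * (K + o) + 2 * o) * c = (o + K * (K + o) + (K - 1) * c) + i * (2 * (o + K * (K + o))).
Proof. move=> -> ->; rewrite addnK; ring. Qed.

Lemma e4 o K : K = 2 * o + 1 -> o + K * (K + o) = 6 * (o * o) + 6 * o + 1.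
Proof. move=> ->; ring. Qed.

Theorem lemma43 (m : nat) :
  7 <= m -> m %% 4 = 3 ->
  let N := 3 ^ m - 1 in
  let v := (3 ^ m - 1) %/ 2 + 3 ^ ((m - 1) %/ 2) - 1 in
  gcdn v N = 1 /\
  (forall i : nat, i <= (3 ^ ((m - 1) %/ 2) + 1) %/ 4 ->
     wt3 m ((v * (1 + 2 * i)) %% N) %% 4 = 3).
Proof.
move=> hm h4 N v.
have hmt : m = 4 * (m %/ 4) + 3 by lia.
set t := m %/ 4 in hmt.
set k := 2 * t + 1.
have hk : (m - 1) %/ 2 = k by rewrite /k; lia.
set K := 3 ^ k.
have hKm : 3 ^ m = 3 * K * K.
  by rewrite hmt /K -mulnA -expnD -expnS; congr (3 ^ _); rewrite /k; lia.
have h9 : 9 ^ t %% 4 = 1.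
  by rewrite -modnXm /= exp1n.
have hK9 : K = 3 * 9 ^ t by rewrite /K /k addn1 expnS expnM.
have [o ho] : exists o, K = 2 * o + 1 /\ o %% 2 = 1 by exists (K %/ 2); lia.
case: ho => hKo ho2.
set O := o + K * (K + o).
have hN : N = 2 * O by rewrite /N hKm /O hKo; nia.
have hv : v = O + 2 * o.
  by rewrite /v hk -/K -/N hN mulKn // hKo; lia.
clearbody v N.
split.
-
  have hOo : O = (1 + K + 4 * o + 4) * o + 1 by rewrite /O hKo; nia.
  have oo : odd o by move: ho2; rewrite modn2; case: (odd o).
  have oK : odd K by rewrite hKo oddD oddM.
  have vodd : odd v by rewrite hv /O !oddD !oddM oddD oo oK.
  have Oodd : odd O by rewrite /O !oddD !oddM oddD oo oK.
  apply/eqP; rewrite -dvdn1.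
  have dv : gcdn v N %| v := dvdn_gcdl _ _.
  have dN : gcdn v N %| N := dvdn_gcdr _ _.
  have cd2 : coprime (gcdn v N) 2.
    rewrite coprimen2; apply/negP => ev.
    have : 2 %| v by apply: dvdn_trans dv; by rewrite dvdn2; apply/negP.
    by rewrite dvdn2 vodd.
  set d := gcdn v N in dv dN cd2 *; clearbody d.
  rewrite hN Gauss_dvdr // in dN.
  rewrite hv (dvdn_addr _ dN) Gauss_dvdr // in dv.
  by rewrite hOo (dvdn_addr _ (dvdn_mull _ dv)) in dN.
- move=> i; rewrite hk -/K => hi.
  have o2 : 2 * i <= o + 1 by lia.
  set c := 1 + 2 * i.
  have hco : o * c <= o * (o + 2) by apply: leq_mul => //; rewrite /c; lia.
  have hco' : o * (o + 2) = o * o + 2 * o by ring.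
  have hOe : O = 6 * (o * o) + 6 * o + 1 by rewrite /O; apply: e4.
  have hT : (v * c) %% N = O + (K - 1) * c.
    have -> : v * c = (O + (K - 1) * c) + i * N by rewrite hv hN /O; apply: e3.
    rewrite addnC modnMDl modn_small //.
    rewrite hN hKo addnK.
    have -> : 2 * o * c = 2 * (o * c) by rewrite mulnA.
    lia.
  rewrite hT.
  have hm' : m = k + (k + 1) by rewrite hmt /k; lia.
  have [hc|hc] : c <= o \/ c = o + 2 by rewrite /c; lia.
  + have e : O + (K - 1) * c = (o - c) + 3 ^ k * ((o + c) + 3 ^ k * 1).
      by rewrite -/K /O; apply: e1.
    rewrite hm' e wt3_split; last by rewrite -/K; lia.
    rewrite wt3_split; last by rewrite -/K; lia.
    rewrite wt3_small //.
    have := wt3_compl k (o - c) (o + c) (ltac:(rewrite -/K; lia)).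
    rewrite /k; lia.
  + have e : O + (K - 1) * c = (3 ^ k - 2) + 3 ^ k * (0 + 3 ^ k * 2).
      by rewrite -/K /O hc; apply: e2 => //; lia.
    rewrite hm' e wt3_split; last by rewrite -/K; lia.
    rewrite wt3_split; last by rewrite -/K; lia.
    rewrite wt3_small // wt3_0.
    have := wt3_compl k (3 ^ k - 2) 1 (ltac:(rewrite -/K; lia)).
    have := wt3_split 1 (2 * t) 1 0 (erefl).
    rewrite muln0 addn0 wt3_small // wt3_0 addnC -/k => ->.
    rewrite /k; lia.
Qed.
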